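(* Let $t_1\ge 0$, let $t_2=0$ or $t_2\ge 2$, and let $t_3\ge 0$ be integers. Then $\rho(F_1(t_1,t_2,t_3))<\rho(F_0(t_1+1,t_2+1,t_3))$. (Both graphs have the same number of edges, namely $3t_1+2t_2+2t_3+7$ if $t_3\ge1$ and $3t_1+2t_2+5$ if $t_3=0$.)
   Context: $\rho(G)$ denotes the largest eigenvalue of the adjacency matrix of $G$. For integers $t_1,t_2,t_3\ge 0$, the graph $F_0(t_1,t_2,t_3)$ is defined as follows. It has a central vertex $u^*$. (a) For each $i=1,\dots,t_1$ there are two vertices $a_i,b_i$ forming a triangle $u^*a_ib_i$. (b) If $t_2\ge 1$, there are vertices $v,u_1,\dots,u_{t_2}$ with each $u_j$ adjacent to both $u^*$ and $v$ (so these form a $K_{2,t_2}$ in which $u^*$ is a vertex of the 2-element side). (c) If $t_3\ge 1$, there are vertices $v_1',v_2'$, both adjacent to $u^*$, and vertices $v_1,\dots,v_{t_3}$, each adjacent to both $v_1'$ and $v_2'$ (so these form a $K_{2,t_3+1}$ attached at the vertex $u^*$ of its $(t_3+1)$-element side). There are no other vertices or edges; the three parts share only $u^*$. Thus $F_0(t_1,t_2,t_3)$ has $3t_1+2t_2$ edges if $t_3=0$ and $3t_1+2t_2+2t_3+2$ edges if $t_3\ge1$. The graph $F_1(t_1,t_2,t_3)$ is obtained from $F_0(t_1,t_2,t_3)$ by adding four new vertices $w_1,w_2,w_3,w_4$ and the edges $u^*w_3,w_3w_1,w_1w_2,w_2w_4,w_4u^*$, i.e. attaching a 5-cycle at $u^*$.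 *)

(* Defs.v *)
From HB Require Import structures.
From mathcomp Require Import all_boot all_order all_algebra.
From mathcomp Require Import reals.
Set Implicit Arguments. Unset Strict Implicit. Unset Printing Implicit Defensive.
Import Order.TTheory GRing.Theory Num.Theory.
Local Open Scope ring_scope.

(* A simple graph on vertex set {0,...,n-1} given by an edge list (pairs of
   distinct vertex labels, no loops); its adjacency matrix over R. *)
Definition adj_mx (R : nzRingType) (n : nat) (E : seq (nat * nat)) : 'M[R]_n :=
  \matrix_(i < n, j < n)
    (if ((i : nat), (j : nat)) \in E then 1 else if ((j : nat), (i : nat)) \in E then 1 else 0).

Definition is_largest_eigenvalue (R : realType) (n : nat) (A : 'M[R]_n) (r : R) : Prop :=
  eigenvalue A r /\ (forall x : R, eigenvalue A x -> x <= r).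

(* Vertex numbering of F_0(t1,t2,t3):
     0                    = u*
     1 + 2i, 2 + 2i       = a_i, b_i         (i < t1)
   let B := 1 + 2 t1; if t2 >= 1:
     B                    = v
     B + 1 + j            = u_j              (j < t2)
   let C := B + (t2 + 1 if t2 >= 1 else 0); if t3 >= 1:
     C, C + 1             = v1', v2'
     C + 2 + k            = v_k              (k < t3)                      *)
Definition F0_B (t1 : nat) : nat := (1 + 2 * t1)%N.
Definition F0_C (t1 t2 : nat) : nat :=
  (F0_B t1 + (if (0 < t2)%N then t2 + 1 else 0))%N.
Definition F0_n (t1 t2 t3 : nat) : nat :=
  (F0_C t1 t2 + (if (0 < t3)%N then t3 + 2 else 0))%N.

Definition F0_edges (t1 t2 t3 : nat) : seq (nat * nat) :=
  let ustar := 0%N in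
  let a i := (1 + 2 * i)%N in
  let b i := (2 + 2 * i)%N in
  let v := F0_B t1 in
  let u j := (F0_B t1 + 1 + j)%N in
  let v1' := F0_C t1 t2 in
  let v2' := (F0_C t1 t2 + 1)%N in
  let vk k := (F0_C t1 t2 + 2 + k)%N in
  (* (a) triangles u* a_i b_i *)
  [seq (ustar, a i) | i <- iota 0 t1] ++
  [seq (ustar, b i) | i <- iota 0 t1] ++
  [seq (a i, b i) | i <- iota 0 t1] ++
  (* (b) K_{2,t2} with parts {u*, v} and {u_1..u_t2} *)
  (if (0 < t2)%N then
     [seq (ustar, u j) | j <- iota 0 t2] ++ [seq (v, u j) | j <- iota 0 t2]
   else [::]) ++
  (* (c) K_{2,t3+1} with parts {v1', v2'} and {u*, v_1..v_t3} *)
  (if (0 < t3)%N then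
     [:: (ustar, v1'); (ustar, v2')] ++
     [seq (v1', vk k) | k <- iota 0 t3] ++ [seq (v2', vk k) | k <- iota 0 t3]
   else [::]).

(* F_1(t1,t2,t3): F_0 plus new vertices w1,w2,w3,w4 numbered
   D, D+1, D+2, D+3 with D := F0_n t1 t2 t3, and the 5-cycle
   u* w3 w1 w2 w4 u*. *)
Definition F1_n (t1 t2 t3 : nat) : nat := (F0_n t1 t2 t3 + 4)%N.

Definition F1_edges (t1 t2 t3 : nat) : seq (nat * nat) :=
  let D := F0_n t1 t2 t3 in
  let w1 := D in let w2 := (D + 1)%N in let w3 := (D + 2)%N in let w4 := (D + 3)%N in
  F0_edges t1 t2 t3 ++ [:: (0%N, w3); (w3, w1); (w1, w2); (w2, w4); (w4, 0%N)].

Definition A_F0 (R : nzRingType) (t1 t2 t3 : nat) : 'M[R]_(F0_n t1 t2 t3) :=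
  adj_mx R (F0_n t1 t2 t3) (F0_edges t1 t2 t3).
Definition A_F1 (R : nzRingType) (t1 t2 t3 : nat) : 'M[R]_(F1_n t1 t2 t3) :=
  adj_mx R (F1_n t1 t2 t3) (F1_edges t1 t2 t3).

(* Main.v *)
Require Import Defs.
From HB Require Import structures.
From mathcomp Require Import all_boot all_order all_algebra.
From mathcomp Require Import reals.
From mathcomp Require Import zify ring lra.
Import Order.TTheory GRing.Theory Num.Theory.

Local Open Scope ring_scope.
Local Close Scope ring_scope.
Definition adjb (E : seq (nat * nat)) (i j : nat) : bool := ((i, j) \in E) || ((j, i) \in E).

Definition Eg (t1 t2 t3 : nat) (cyc : bool) : seq (nat * nat) :=
  let D := F0_n t1 t2 t3 in
  F0_edges t1 t2 t3 ++
  (if cyc then [:: (0%N, (D + 2)%N); ((D + 2)%N, D); (D, (D + 1)%N); ((D + 1)%N, (D + 3)%N); ((D + 3)%N, 0%N)]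
   else [::]).

Lemma mem_piece (f g : nat -> nat) t x y (Q : bool) (k0 : nat) :
  (Q -> [&& (k0 < t)%N, x == f k0 & y == g k0]) ->
  (forall k, (k < t)%N -> x = f k -> y = g k -> Q) ->
  ((x, y) \in [seq (f k, g k) | k <- iota 0 t]) = Q.
Proof.
move=> H1 H2; apply/mapP/idP.
  by case=> k; rewrite mem_iota add0n => /andP[_ kt] [Hx Hy]; apply: (H2 k).
move=> /H1 /and3P[kt /eqP -> /eqP ->]; exists k0 => //.
by rewrite mem_iota add0n.
Qed.

Definition memF0 (t1 t2 t3 : nat) (x y : nat) : bool :=
  let B := F0_B t1 in let C := F0_C t1 t2 in
  [&& x == 0, y %% 2 == 1 & (1 <= y < 1 + 2 * t1)] ||
  ([&& x == 0, y %% 2 == 0 & (2 <= y < 2 + 2 * t1)] ||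
  ([&& x %% 2 == 1, (1 <= x < 1 + 2 * t1) & y == x.+1] ||
  (([&& (0 < t2), x == 0 & (B + 1 <= y < B + 1 + t2)] ||
   [&& (0 < t2), x == B & (B + 1 <= y < B + 1 + t2)]) ||
  ([&& (0 < t3), x == 0 & y == C] || ([&& (0 < t3), x == 0 & y == C + 1] ||
   ([&& (0 < t3), x == C & (C + 2 <= y < C + 2 + t3)] ||
    [&& (0 < t3), x == C + 1 & (C + 2 <= y < C + 2 + t3)])))))).

Lemma memF0E t1 t2 t3 x y : ((x, y) \in F0_edges t1 t2 t3) = memF0 t1 t2 t3 x y.
Proof.
rewrite /F0_edges /memF0 /= !mem_cat.
have -> : ((x, y) \in [seq (0, (1 + 2 * i)) | i <- iota 0 t1]) =
   [&& x == 0, y %% 2 == 1 & (1 <= y < 1 + 2 * t1)].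
  apply: (@mem_piece _ _ _ _ _ _ (y %/ 2)) => [|k]; [move=> ?; lia|].
  move=> ? -> ->; lia.
have -> : ((x, y) \in [seq (0, (2 + 2 * i)) | i <- iota 0 t1]) =
   [&& x == 0, y %% 2 == 0 & (2 <= y < 2 + 2 * t1)].
  apply: (@mem_piece _ _ _ _ _ _ (y %/ 2 - 1)) => [|k]; [move=> ?; lia|].
  move=> ? -> ->; lia.
have -> : ((x, y) \in [seq ((1 + 2 * i), (2 + 2 * i)) | i <- iota 0 t1]) =
   [&& x %% 2 == 1, (1 <= x < 1 + 2 * t1) & y == x.+1].
  apply: (@mem_piece _ _ _ _ _ _ (x %/ 2)) => [|k]; [move=> ?; lia|].
  move=> ? -> ->; lia.
congr (_ || (_ || (_ || (_ || _)))).
  case: (posnP t2) => [->|t2p] /=; first by [].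
  rewrite mem_cat.
  congr (_ || _).
    apply: (@mem_piece _ _ _ _ _ _ (y - F0_B t1 - 1)) => [|k]; [move=> ?; lia|].
    move=> ? -> ->; lia.
  apply: (@mem_piece _ _ _ _ _ _ (y - F0_B t1 - 1)) => [|k]; [move=> ?; lia|].
  move=> ? -> ->; lia.
case: (posnP t3) => [->|t3p] /=; first by [].
rewrite !in_cons !mem_cat !xpair_eqE.
congr (_ || (_ || (_ || _))).
  apply: (@mem_piece _ _ _ _ _ _ (y - F0_C t1 t2 - 2)) => [|k]; [move=> ?; lia|].
  move=> ? -> ->; lia.
apply: (@mem_piece _ _ _ _ _ _ (y - F0_C t1 t2 - 2)) => [|k]; [move=> ?; lia|].
move=> ? -> ->; lia.
Qed.

Definition memCyc (N : nat) (x y : nat) : bool :=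
  [|| (x == 0) && (y == N + 2), (x == N + 2) && (y == N), (x == N) && (y == N + 1),
      (x == N + 1) && (y == N + 3) | (x == N + 3) && (y == 0)].

Lemma memEgE t1 t2 t3 cyc x y :
  ((x, y) \in Eg t1 t2 t3 cyc) = memF0 t1 t2 t3 x y || cyc && memCyc (F0_n t1 t2 t3) x y.
Proof.
rewrite /Eg mem_cat memF0E; congr (_ || _).
by case: cyc => //=; rewrite !in_cons !xpair_eqE in_nil orbF.
Qed.

Lemma F0facts t1 t2 t3 :
  [/\ F0_B t1 = 1 + 2 * t1,
      (t2 == 0) && (F0_C t1 t2 == F0_B t1) || (0 < t2) && (F0_C t1 t2 == F0_B t1 + t2 + 1) &
      (t3 == 0) && (F0_n t1 t2 t3 == F0_C t1 t2) || (0 < t3) && (F0_n t1 t2 t3 == F0_C t1 t2 + t3 + 2)].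
Proof.
rewrite /F0_n /F0_C /F0_B; split => //.
  case: t2 => [|t2'] /=; lia.
case: t3 => [|t3'] /=; case: t2 => [|t2'] /=; lia.
Qed.

Ltac gen t1 t2 t3 := have := F0facts t1 t2 t3;
  rewrite /memF0 /memCyc;
  move: (F0_n t1 t2 t3) (F0_C t1 t2) (F0_B t1) => N C B [? ? ?].

Definition ncyc (cyc : bool) := if cyc then 4 else 0.
Definition e3 (t3 : nat) := if 0 < t3 then 2 else 0.
Definition ec (cyc : bool) := if cyc then 2 else 0.

Ltac splitH := repeat match goal with
  | Hx : is_true (_ || _) |- _ =>
    let Hy := fresh "Hy" in destruct (orP Hx) as [Hy|Hy]; clear Hx
  | Hx : is_true (_ && _) |- _ =>
    let Hy := fresh "Hy" in let Hz := fresh "Hz" in destruct (andP Hx) as [Hy Hz]; clear Hx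
  end.
Ltac orsearch := lazymatch goal with
  | |- is_true (_ || _) => first [apply/orP; left; orsearch | apply/orP; right; orsearch]
  | _ => lia end.
Ltac nbtac j := (have [Hodd|Heven] : (j %% 2 == 1) \/ (j %% 2 == 0) by lia);
  apply/idP/idP; intro; splitH; orsearch.
Ltac nbtac2 i j := (have [Hoddi|Heveni] : (i %% 2 == 1) \/ (i %% 2 == 0) by lia);
  apply/idP/idP; intro; splitH; orsearch.

Definition two (b : bool) (x : nat) : seq nat := if b then [:: x; x + 1] else [::].
Lemma mem_two b x j : (j \in two b x) = b && ((j == x) || (j == x + 1)).
Proof. by case: b; rewrite /two ?in_cons ?in_nil ?orbF. Qed.

Lemma nb0 t1 t2 t3 cyc j : j < F0_n t1 t2 t3 + ncyc cyc ->
  (j \in iota 1 (2 * t1) ++ iota (F0_B t1 + 1) t2 ++ two (0 < t3) (F0_C t1 t2) ++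
         two cyc (F0_n t1 t2 t3 + 2)) = adjb (Eg t1 t2 t3 cyc) 0 j.
Proof.
rewrite /adjb !memEgE !mem_cat !mem_iota !mem_two /ncyc.
gen t1 t2 t3; case: cyc => /=; move=> jn; nbtac j.
Qed.

Lemma nbT t1 t2 t3 cyc i j : 0 < i < F0_B t1 -> j < F0_n t1 t2 t3 + ncyc cyc ->
  (j \in [:: 0; i + 2 * (i %% 2) - 1]) = adjb (Eg t1 t2 t3 cyc) i j.
Proof.
rewrite /adjb !memEgE !in_cons in_nil /ncyc.
gen t1 t2 t3; case: cyc => /=; move=> Hi jn; nbtac2 i j.
Qed.

Lemma nbV t1 t2 t3 cyc j : 0 < t2 -> j < F0_n t1 t2 t3 + ncyc cyc ->
  (j \in iota (F0_B t1 + 1) t2) = adjb (Eg t1 t2 t3 cyc) (F0_B t1) j.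
Proof.
rewrite /adjb !memEgE mem_iota /ncyc.
gen t1 t2 t3; case: cyc => /=; move=> Hi jn; nbtac j.
Qed.

Lemma nbU t1 t2 t3 cyc i j : F0_B t1 < i < F0_C t1 t2 -> j < F0_n t1 t2 t3 + ncyc cyc ->
  (j \in [:: 0; F0_B t1]) = adjb (Eg t1 t2 t3 cyc) i j.
Proof.
rewrite /adjb !memEgE !in_cons in_nil /ncyc.
gen t1 t2 t3; case: cyc => /=; move=> Hi jn; nbtac2 i j.
Qed.

Lemma nbV' t1 t2 t3 cyc i j : 0 < t3 -> F0_C t1 t2 <= i < F0_C t1 t2 + 2 ->
  j < F0_n t1 t2 t3 + ncyc cyc ->
  (j \in 0 :: iota (F0_C t1 t2 + 2) t3) = adjb (Eg t1 t2 t3 cyc) i j.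
Proof.
rewrite /adjb !memEgE in_cons mem_iota /ncyc.
gen t1 t2 t3; case: cyc => /=; move=> H3 Hi jn;
  (have : (i == C) || (i == C + 1) by lia); move=> Hic; splitH; nbtac2 i j.
Qed.

Lemma nbVk t1 t2 t3 cyc i j : F0_C t1 t2 + 2 <= i < F0_n t1 t2 t3 ->
  j < F0_n t1 t2 t3 + ncyc cyc ->
  (j \in [:: F0_C t1 t2; F0_C t1 t2 + 1]) = adjb (Eg t1 t2 t3 cyc) i j.
Proof.
rewrite /adjb !memEgE !in_cons in_nil /ncyc.
gen t1 t2 t3; case: cyc => /=; move=> Hi jn; nbtac2 i j.
Qed.

Lemma nbW1 t1 t2 t3 j : j < F0_n t1 t2 t3 + 4 ->
  (j \in [:: F0_n t1 t2 t3 + 1; F0_n t1 t2 t3 + 2]) = adjb (Eg t1 t2 t3 true) (F0_n t1 t2 t3) j.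
Proof.
rewrite /adjb !memEgE !in_cons in_nil /=.
gen t1 t2 t3; move=> jn; nbtac j.
Qed.

Lemma nbW2 t1 t2 t3 j : j < F0_n t1 t2 t3 + 4 ->
  (j \in [:: F0_n t1 t2 t3; F0_n t1 t2 t3 + 3]) = adjb (Eg t1 t2 t3 true) (F0_n t1 t2 t3 + 1) j.
Proof.
rewrite /adjb !memEgE !in_cons in_nil /=.
gen t1 t2 t3; move=> jn; nbtac j.
Qed.

Lemma nbW3 t1 t2 t3 j : j < F0_n t1 t2 t3 + 4 ->
  (j \in [:: 0; F0_n t1 t2 t3]) = adjb (Eg t1 t2 t3 true) (F0_n t1 t2 t3 + 2) j.
Proof.
rewrite /adjb !memEgE !in_cons in_nil /=.
gen t1 t2 t3; move=> jn; nbtac j.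
Qed.

Lemma nbW4 t1 t2 t3 j : j < F0_n t1 t2 t3 + 4 ->
  (j \in [:: 0; F0_n t1 t2 t3 + 1]) = adjb (Eg t1 t2 t3 true) (F0_n t1 t2 t3 + 3) j.
Proof.
rewrite /adjb !memEgE !in_cons in_nil /=.
gen t1 t2 t3; move=> jn; nbtac j.
Qed.


Local Open Scope ring_scope.

Section Eig.
Variable R : realType.

Lemma sum_nb n E (v : nat -> R) (i : 'I_n) (L : seq nat) :
  uniq L -> all (fun j => (j < n)%N) L -> (forall j, (j < n)%N -> (j \in L) = adjb E i j) ->
  \sum_(j < n) adj_mx R n E i j * v j = \sum_(j <- L) v j.
Proof.
move=> uL aL HL.
transitivity (\sum_(j < n | (j : nat) \in L) v j).
  rewrite [RHS]big_mkcond; apply: eq_bigr => j _; rewrite mxE HL // /adjb.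
  by case: ((_, _) \in E) => /=; [rewrite mul1r | case: ((_, _) \in E); rewrite ?mul1r ?mul0r].
rewrite -(big_mkord (fun j => j \in L) v) -big_filter.
apply: perm_big; apply: uniq_perm => //; first by rewrite filter_uniq // iota_uniq.
move=> j; rewrite mem_filter mem_iota add0n /=.
case jL: (j \in L) => //=.
by rewrite subn0; move/allP: aL => /(_ j jL).
Qed.

Lemma sum_iota_const (v : nat -> R) a k c :
  (forall j, (a <= j < a + k)%N -> v j = c) -> \sum_(j <- iota a k) v j = k%:R * c.
Proof.
move=> H; rewrite (eq_big_seq (fun _ => c)); last by move=> j; rewrite mem_iota => /H.
by rewrite big_const_seq count_predT size_iota iter_addr_0 mulr_natl.
Qed.


Lemma sum_two (v : nat -> R) b x : \sum_(j <- two b x) v j = if b then v x + v (x + 1)%N else 0.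
Proof. by case: b; rewrite /two ?big_cons ?big_nil ?addr0. Qed.

Lemma sum_pair (v : nat -> R) x y : \sum_(j <- [:: x; y]) v j = v x + v y.
Proof. by rewrite !big_cons big_nil addr0. Qed.

Definition vec (t1 t2 t3 : nat) (a p q s w d c : R) (j : nat) : R :=
  if j == 0%N then 1 else if (j < F0_B t1)%N then a
  else if (j < F0_C t1 t2)%N then (if j == F0_B t1 then p else q)
  else if (j < F0_n t1 t2 t3)%N then (if (j < F0_C t1 t2 + 2)%N then s else w)
  else if (j < F0_n t1 t2 t3 + 2)%N then d else c.

Ltac vtac t1 t2 t3 := rewrite /vec; have := F0facts t1 t2 t3;
  move: (F0_n t1 t2 t3) (F0_C t1 t2) (F0_B t1) => N C B [? ? ?] *;
  repeat (case: ifP => ?); try reflexivity; exfalso; splitH; lia.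

Section V.
Variables (t1 t2 t3 : nat) (a p q s w d c : R).
Local Notation v := (vec t1 t2 t3 a p q s w d c).
Lemma v0 : v 0 = 1. Proof. by rewrite /vec eqxx. Qed.
Lemma vT j : (0 < j < F0_B t1)%N -> v j = a. Proof. vtac t1 t2 t3. Qed.
Lemma vV j : (0 < t2)%N -> j = F0_B t1 -> v j = p. Proof. vtac t1 t2 t3. Qed.
Lemma vU j : (F0_B t1 < j < F0_C t1 t2)%N -> v j = q. Proof. vtac t1 t2 t3. Qed.
Lemma vV' j : (0 < t3)%N -> (F0_C t1 t2 <= j < F0_C t1 t2 + 2)%N -> v j = s. Proof. vtac t1 t2 t3. Qed.
Lemma vVk j : (F0_C t1 t2 + 2 <= j < F0_n t1 t2 t3)%N -> v j = w. Proof. vtac t1 t2 t3. Qed.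
Lemma vW12 j : (F0_n t1 t2 t3 <= j < F0_n t1 t2 t3 + 2)%N -> v j = d. Proof. vtac t1 t2 t3. Qed.
Lemma vW34 j : (F0_n t1 t2 t3 + 2 <= j)%N -> v j = c. Proof. vtac t1 t2 t3. Qed.
End V.

Lemma uniq_cat_sep (s1 s2 : seq nat) m : uniq s1 -> uniq s2 ->
  all (fun j => j < m)%N s1 -> all (fun j => m <= j)%N s2 -> uniq (s1 ++ s2).
Proof.
move=> u1 u2 a1 a2; rewrite cat_uniq u1 u2 andbT /=; apply/hasPn => j /(allP a2) /= h2.
apply/negP => /(allP a1) /=; lia.
Qed.

Lemma uniq_two b x : uniq (two b x).
Proof. case: b => //=; rewrite inE andbT; lia. Qed.

Lemma uniq_pair (x y : nat) : x != y -> uniq [:: x; y].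
Proof. by move=> h; rewrite /= inE h. Qed.

Lemma classify t1 t2 t3 cyc (i : nat) : (i < F0_n t1 t2 t3 + ncyc cyc)%N ->
  [|| i == 0%N, (0 < i < F0_B t1)%N, (0 < t2)%N && (i == F0_B t1), (F0_B t1 < i < F0_C t1 t2)%N,
      (0 < t3)%N && (F0_C t1 t2 <= i < F0_C t1 t2 + 2)%N, (F0_C t1 t2 + 2 <= i < F0_n t1 t2 t3)%N |
      cyc && [|| i == F0_n t1 t2 t3, i == (F0_n t1 t2 t3 + 1)%N, i == (F0_n t1 t2 t3 + 2)%N |
                 i == (F0_n t1 t2 t3 + 3)%N]].
Proof.
have := F0facts t1 t2 t3; rewrite /ncyc.
move: (F0_n t1 t2 t3) (F0_C t1 t2) (F0_B t1) => N C B [? ? ?]; case: cyc => /= ?; splitH; lia.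
Qed.

Ltac rng t1 t2 t3 := repeat match goal with H : is_true _ |- _ => revert H end;
  have := F0facts t1 t2 t3; rewrite ?/ncyc;
  move: (F0_n t1 t2 t3) (F0_C t1 t2) (F0_B t1) => N C B [? ? ?];
  repeat match goal with |- context [if ?b then _ else _] => case: b end;
  move=> *; splitH; lia.

Ltac alltac t1 t2 t3 := apply/allP => ?; rewrite ?in_cons ?mem_cat ?in_cons ?mem_iota ?mem_two ?in_nil;
  rng t1 t2 t3.

Section EE.
Variables (n : nat) (E : seq (nat * nat)) (t1 t2 t3 : nat) (cyc : bool) (a p q s w d c r : R).
Local Notation V := (vec t1 t2 t3 a p q s w d c).
Hypotheses (hn : n = (F0_n t1 t2 t3 + ncyc cyc)%N)
  (hE : forall x y, ((x,y) \in E) = ((x,y) \in Eg t1 t2 t3 cyc))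
  (ha : r * a = 1 + a) (hq : r * q = 1 + p) (hp : r * p = t2%:R * q)
  (hs : r * s = 1 + t3%:R * w) (hw : r * w = s + s) (hd : r * d = d + c) (hc : r * c = 1 + d)
  (hr : r = (2 * t1)%:R * a + t2%:R * q + (if (0 < t3)%N then s + s else 0) + (if cyc then c + c else 0)).

Lemma eigen_eq (i : 'I_n) : \sum_(j < n) adj_mx R n E i j * V j = r * V i.
Proof.
have adjE : forall x y, adjb E x y = adjb (Eg t1 t2 t3 cyc) x y by move=> x y; rewrite /adjb !hE.
have iN : (i < F0_n t1 t2 t3 + ncyc cyc)%N by rewrite -hn.
have jN : forall j, (j < n)%N -> (j < F0_n t1 t2 t3 + ncyc cyc)%N by move=> j; rewrite hn.
move: (@classify t1 t2 t3 cyc i iN) => /orP[Hi|/orP[Hi|/orP[Hi|/orP[Hi|/orP[Hi|/orP[Hi|/andP[Hc Hi]]]]]]].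
-
  have U : uniq (iota 1 (2 * t1) ++ iota (F0_B t1 + 1) t2 ++ two (0 < t3)%N (F0_C t1 t2) ++ two cyc (F0_n t1 t2 t3 + 2)).
    apply: (@uniq_cat_sep _ _ (F0_B t1)); rewrite ?iota_uniq //; try by alltac t1 t2 t3.
    apply: (@uniq_cat_sep _ _ (F0_C t1 t2)); rewrite ?iota_uniq //; try by alltac t1 t2 t3.
    apply: (@uniq_cat_sep _ _ (F0_n t1 t2 t3)); rewrite ?uniq_two //; try by alltac t1 t2 t3.
  have A : all (fun j => (j < n)%N) (iota 1 (2 * t1) ++ iota (F0_B t1 + 1) t2 ++ two (0 < t3)%N (F0_C t1 t2) ++ two cyc (F0_n t1 t2 t3 + 2)).
    by apply/allP => j jL; rewrite hn; move: j jL; apply/allP; case: cyc; alltac t1 t2 t3.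
  have M : forall j, (j < n)%N -> (j \in iota 1 (2 * t1) ++ iota (F0_B t1 + 1) t2 ++ two (0 < t3)%N (F0_C t1 t2) ++ two cyc (F0_n t1 t2 t3 + 2)) = adjb E i j.
    by move=> j /jN jn; rewrite adjE (eqP Hi); exact: nb0.
  rewrite (@sum_nb _ _ _ _ _ U A M).
  rewrite !big_cat /= !sum_two (@sum_iota_const _ _ _ a); last first.
    by move=> j Hj; apply: vT; rng t1 t2 t3.
  rewrite (@sum_iota_const _ _ _ q); last first.
    by move=> j Hj; apply: vU; rng t1 t2 t3.
  rewrite (eqP Hi) v0 mulr1 [in RHS]hr.
  have e1 : (0 < t3)%N -> V (F0_C t1 t2) + V (F0_C t1 t2 + 1)%N = s + s.
    by move=> h3; rewrite !vV' //; rng t1 t2 t3.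
  have e2 : cyc -> V (F0_n t1 t2 t3 + 2)%N + V (F0_n t1 t2 t3 + 2 + 1)%N = c + c.
    by move=> hc'; rewrite !vW34 //; lia.
  case: ifP => h3; case: (boolP cyc) => hc' ; rewrite ?e1 ?e2 //; ring.
-
  have U : uniq ([:: 0%N; (i + 2 * (i %% 2) - 1)%N]) by apply: uniq_pair; rng t1 t2 t3.
  have A : all (fun j => (j < n)%N) ([:: 0%N; (i + 2 * (i %% 2) - 1)%N]) by apply/allP => j jL; rewrite hn; move: j jL; apply/allP; alltac t1 t2 t3.
  have M : forall j, (j < n)%N -> (j \in [:: 0%N; (i + 2 * (i %% 2) - 1)%N]) = adjb E i j by move=> j /jN jn; rewrite adjE; exact: nbT.
  rewrite (@sum_nb _ _ _ _ _ U A M).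
  rewrite sum_pair v0 (@vT _ _ _ _ _ _ _ _ _ _ i) // (@vT _ _ _ _ _ _ _ _ _ _ (i + _ - 1)%N); last by rng t1 t2 t3.
  by rewrite ha.
-
  case/andP: Hi => H2 Hi.
  have U : uniq ((iota (F0_B t1 + 1) t2)) by exact: iota_uniq.
  have A : all (fun j => (j < n)%N) ((iota (F0_B t1 + 1) t2)) by apply/allP => j jL; rewrite hn; move: j jL; apply/allP; alltac t1 t2 t3.
  have M : forall j, (j < n)%N -> (j \in (iota (F0_B t1 + 1) t2)) = adjb E i j by move=> j /jN jn; rewrite adjE (eqP Hi); exact: nbV.
  rewrite (@sum_nb _ _ _ _ _ U A M).
  rewrite (@sum_iota_const _ _ _ q); last by move=> j Hj; apply: vU; rng t1 t2 t3.
  by rewrite (@vV _ _ _ _ _ _ _ _ _ _ i) // ?(eqP Hi) // hp mulr_natl.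
-
  have U : uniq ([:: 0%N; F0_B t1]) by apply: uniq_pair; rng t1 t2 t3.
  have A : all (fun j => (j < n)%N) ([:: 0%N; F0_B t1]) by apply/allP => j jL; rewrite hn; move: j jL; apply/allP; alltac t1 t2 t3.
  have M : forall j, (j < n)%N -> (j \in [:: 0%N; F0_B t1]) = adjb E i j by move=> j /jN jn; rewrite adjE; exact: nbU.
  rewrite (@sum_nb _ _ _ _ _ U A M).
  have h2 : (0 < t2)%N by rng t1 t2 t3.
  by rewrite sum_pair v0 (@vU _ _ _ _ _ _ _ _ _ _ i) // (@vV _ _ _ _ _ _ _ _ _ _ (F0_B t1)) // hq.
-
  case/andP: Hi => H3 Hi.
  have U : uniq ((0%N :: iota (F0_C t1 t2 + 2) t3)) by rewrite cons_uniq iota_uniq andbT mem_iota; rng t1 t2 t3.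
  have A : all (fun j => (j < n)%N) ((0%N :: iota (F0_C t1 t2 + 2) t3)) by apply/allP => j jL; rewrite hn; move: j jL; apply/allP; alltac t1 t2 t3.
  have M : forall j, (j < n)%N -> (j \in (0%N :: iota (F0_C t1 t2 + 2) t3)) = adjb E i j by move=> j /jN jn; rewrite adjE; exact: nbV'.
  rewrite (@sum_nb _ _ _ _ _ U A M).
  rewrite big_cons v0 (@sum_iota_const _ _ _ w); last by move=> j Hj; apply: vVk; rng t1 t2 t3.
  by rewrite (@vV' _ _ _ _ _ _ _ _ _ _ i) // hs mulr_natl.
-
  have U : uniq ([:: F0_C t1 t2; (F0_C t1 t2 + 1)%N]) by apply: uniq_pair; lia.
  have A : all (fun j => (j < n)%N) ([:: F0_C t1 t2; (F0_C t1 t2 + 1)%N]) by apply/allP => j jL; rewrite hn; move: j jL; apply/allP; alltac t1 t2 t3.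
  have M : forall j, (j < n)%N -> (j \in [:: F0_C t1 t2; (F0_C t1 t2 + 1)%N]) = adjb E i j by move=> j /jN jn; rewrite adjE; exact: nbVk.
  rewrite (@sum_nb _ _ _ _ _ U A M).
  have h3 : (0 < t3)%N by rng t1 t2 t3.
  by rewrite sum_pair (@vVk _ _ _ _ _ _ _ _ _ _ i) // hw !(@vV' _ _ _ _ _ _ _ _ _ _ _ h3) //; lia.
-
  have jN' : forall j, (j < n)%N -> (j < F0_n t1 t2 t3 + 4)%N by move=> j /jN; rewrite Hc.
  have adjE' : forall x y, adjb E x y = adjb (Eg t1 t2 t3 true) x y by move=> x y; rewrite adjE Hc.
  move: Hi => /orP[Hi|/orP[Hi|/orP[Hi|Hi]]].
  - have U : uniq ([:: (F0_n t1 t2 t3 + 1)%N; (F0_n t1 t2 t3 + 2)%N]) by apply: uniq_pair; lia.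
    have A : all (fun j => (j < n)%N) ([:: (F0_n t1 t2 t3 + 1)%N; (F0_n t1 t2 t3 + 2)%N]) by apply/allP => j jL; rewrite hn Hc; move: j jL; apply/allP; alltac t1 t2 t3.
    have M : forall j, (j < n)%N -> (j \in [:: (F0_n t1 t2 t3 + 1)%N; (F0_n t1 t2 t3 + 2)%N]) = adjb E i j by move=> j /jN' jn; rewrite adjE' (eqP Hi); exact: nbW1.
    rewrite (@sum_nb _ _ _ _ _ U A M) sum_pair (eqP Hi) ?v0.
    have e0 : vec t1 t2 t3 a p q s w d c (F0_n t1 t2 t3 + 1)%N = d by apply: vW12; lia.
    have e1 : vec t1 t2 t3 a p q s w d c (F0_n t1 t2 t3 + 2)%N = c by apply: vW34; lia.
    have e2 : vec t1 t2 t3 a p q s w d c (F0_n t1 t2 t3) = d by apply: vW12; lia.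
    rewrite e0 e1 e2; by rewrite hd.
  - have U : uniq ([:: F0_n t1 t2 t3; (F0_n t1 t2 t3 + 3)%N]) by apply: uniq_pair; lia.
    have A : all (fun j => (j < n)%N) ([:: F0_n t1 t2 t3; (F0_n t1 t2 t3 + 3)%N]) by apply/allP => j jL; rewrite hn Hc; move: j jL; apply/allP; alltac t1 t2 t3.
    have M : forall j, (j < n)%N -> (j \in [:: F0_n t1 t2 t3; (F0_n t1 t2 t3 + 3)%N]) = adjb E i j by move=> j /jN' jn; rewrite adjE' (eqP Hi); exact: nbW2.
    rewrite (@sum_nb _ _ _ _ _ U A M) sum_pair (eqP Hi) ?v0.
    have e0 : vec t1 t2 t3 a p q s w d c (F0_n t1 t2 t3) = d by apply: vW12; lia.
    have e1 : vec t1 t2 t3 a p q s w d c (F0_n t1 t2 t3 + 3)%N = c by apply: vW34; lia.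
    have e2 : vec t1 t2 t3 a p q s w d c (F0_n t1 t2 t3 + 1)%N = d by apply: vW12; lia.
    rewrite e0 e1 e2; by rewrite hd.
  - have U : uniq ([:: 0%N; F0_n t1 t2 t3]) by apply: uniq_pair; rng t1 t2 t3.
    have A : all (fun j => (j < n)%N) ([:: 0%N; F0_n t1 t2 t3]) by apply/allP => j jL; rewrite hn Hc; move: j jL; apply/allP; alltac t1 t2 t3.
    have M : forall j, (j < n)%N -> (j \in [:: 0%N; F0_n t1 t2 t3]) = adjb E i j by move=> j /jN' jn; rewrite adjE' (eqP Hi); exact: nbW3.
    rewrite (@sum_nb _ _ _ _ _ U A M) sum_pair (eqP Hi) ?v0.
    have e0 : vec t1 t2 t3 a p q s w d c (F0_n t1 t2 t3) = d by apply: vW12; lia.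
    have e1 : vec t1 t2 t3 a p q s w d c (F0_n t1 t2 t3 + 2)%N = c by apply: vW34; lia.
    rewrite e0 e1; by rewrite hc.
  - have U : uniq ([:: 0%N; (F0_n t1 t2 t3 + 1)%N]) by apply: uniq_pair; rng t1 t2 t3.
    have A : all (fun j => (j < n)%N) ([:: 0%N; (F0_n t1 t2 t3 + 1)%N]) by apply/allP => j jL; rewrite hn Hc; move: j jL; apply/allP; alltac t1 t2 t3.
    have M : forall j, (j < n)%N -> (j \in [:: 0%N; (F0_n t1 t2 t3 + 1)%N]) = adjb E i j by move=> j /jN' jn; rewrite adjE' (eqP Hi); exact: nbW4.
    rewrite (@sum_nb _ _ _ _ _ U A M) sum_pair (eqP Hi) ?v0.
    have e0 : vec t1 t2 t3 a p q s w d c (F0_n t1 t2 t3 + 1)%N = d by apply: vW12; lia.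
    have e1 : vec t1 t2 t3 a p q s w d c (F0_n t1 t2 t3 + 3)%N = c by apply: vW34; lia.
    rewrite e0 e1; by rewrite hc.
Qed.
End EE.

End Eig.

Local Open Scope ring_scope.
Lemma perron_largest (R : realType) n (A : 'M[R]_n) (v : 'I_n -> R) r :
  (forall i j, A i j = A j i) -> (forall i j, 0 <= A i j) -> (forall i, 0 < v i) ->
  (forall i, \sum_j A i j * v j = r * v i) -> (0 < n)%N -> is_largest_eigenvalue A r.
Proof.
move=> Asym Age0 vpos Aeq n0.
split.
  apply/eigenvalueP; exists (\row_j v j).
    apply/rowP => j; rewrite !mxE -Aeq.
    by apply: eq_bigr => k _; rewrite !mxE Asym mulrC.
  apply/eqP => /rowP /(_ (Ordinal n0)); rewrite !mxE => /eqP.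
  by rewrite gt_eqF.
move=> x /eigenvalueP [w Hw Hw0].
pose F := fun j : 'I_n => `|w 0 j| / v j.
case: (@arg_maxP _ R 'I_n (Ordinal n0) predT F erefl) => j _ Hj.
have Hk : forall k, `|w 0 k| <= F j * v k.
  move=> k; have := Hj k erefl; rewrite /F /= => H.
  by rewrite -ler_pdivrMr // .
have wj0 : 0 < `|w 0 j|.
  rewrite lt_def normr_ge0 andbT normr_eq0; apply/negP => /eqP wj.
  move/negP: Hw0; apply; apply/eqP/rowP => k; rewrite mxE.
  have := Hk k; rewrite /F wj normr0 mul0r mul0r normr_le0.
  by move/eqP.
have e : x * w 0 j = \sum_k w 0 k * A k j.
  by move/rowP: Hw => /(_ j); rewrite !mxE => <-.
have : `|x| * `|w 0 j| <= r * `|w 0 j|.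
  rewrite -normrM e.
  apply: (le_trans (ler_norm_sum _ _ _)).
  apply: (@le_trans _ _ (\sum_k F j * (A j k * v k))).
    apply: ler_sum => k _; rewrite normrM (ger0_norm (Age0 _ _)) Asym.
    rewrite mulrCA mulrC; apply: ler_wpM2l; [exact: Age0 | exact: Hk].
  rewrite -mulr_sumr Aeq /F mulrCA mulfVK ?gt_eqF //.
rewrite ler_pM2r // => H.
exact: le_trans (ler_norm _) H.
Qed.

Local Open Scope ring_scope.

Section E.
Variable R : realType.

Definition e3R (t3 : nat) : R := if (0 < t3)%N then 2 else 0.
Definition ecR (cyc : bool) : R := if cyc then 2 else 0.
Definition hsec (t1 t2 t3 : nat) (cyc : bool) (x : R) : R :=
  2 * t1%:R / (x - 1) + t2%:R * x / (x ^+ 2 - t2%:R) + e3R t3 * x / (x ^+ 2 - 2 * t3%:R)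
  + ecR cyc * (x - 1) / (x ^+ 2 - x - 1).
Definition pos (t2 t3 : nat) (x : R) :=
  [/\ 1 < x, t2%:R < x ^+ 2, 2 * t3%:R < x ^+ 2 & 0 < x ^+ 2 - x - 1].

Lemma vec_pos t1 t2 t3 (a p q s w d c : R) j : 0 < a -> ((0 < t2)%N -> 0 < p) -> 0 < q -> 0 < s ->
  0 < w -> 0 < d -> 0 < c -> 0 < vec R t1 t2 t3 a p q s w d c j.
Proof.
move=> ha hp hq hs hw hd hc; rewrite /vec.
case: ifPn => h0; first exact: ltr01.
case: ifPn => h1 //.
case: ifPn => h2; first (case: ifPn => h3 //; apply: hp).
  move: h1 h2 h3; have := F0facts t1 t2 t3.
  move: (F0_n t1 t2 t3) (F0_C t1 t2) (F0_B t1) => N C B [? ? ?] *; splitH; lia.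
case: ifPn => h3; first by case: ifPn.
by case: ifPn.
Qed.

Lemma largest_of_root n E t1 t2 t3 cyc (x : R) :
  n = (F0_n t1 t2 t3 + ncyc cyc)%N ->
  (forall u v, ((u, v) \in E) = ((u, v) \in Eg t1 t2 t3 cyc)) ->
  pos t2 t3 x -> hsec t1 t2 t3 cyc x = x ->
  is_largest_eigenvalue (adj_mx R n E) x.
Proof.
move=> hn hE [x1 x2 x3 x4] hx.
have nz1 : x - 1 != 0 by rewrite subr_eq0 gt_eqF.
have nz2 : x ^+ 2 - t2%:R != 0 by rewrite subr_eq0 gt_eqF.
have nz3 : x ^+ 2 - 2 * t3%:R != 0 by rewrite subr_eq0 gt_eqF.
have nz4 : x ^+ 2 - x - 1 != 0 by rewrite gt_eqF.
have p1 : 0 < x - 1 by rewrite subr_gt0.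
have p2 : 0 < x ^+ 2 - t2%:R by rewrite subr_gt0.
have p3 : 0 < x ^+ 2 - 2 * t3%:R by rewrite subr_gt0.
have x0 : 0 < x by apply: lt_trans x1.
pose a := (x - 1)^-1.
pose q := x / (x ^+ 2 - t2%:R).
pose p := t2%:R / (x ^+ 2 - t2%:R).
pose s := x / (x ^+ 2 - 2 * t3%:R).
pose w := 2 / (x ^+ 2 - 2 * t3%:R).
pose d := (x ^+ 2 - x - 1)^-1.
pose c := (x - 1) / (x ^+ 2 - x - 1).
apply: (@perron_largest R n (adj_mx R n E) (fun i => vec R t1 t2 t3 a p q s w d c i)).
- by move=> i j; rewrite !mxE; case: ((i : nat, j : nat) \in E); case: ((j : nat, i : nat) \in E).
- by move=> i j; rewrite mxE; case: ifP => _ //; case: ifP.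
- move=> i; apply: vec_pos.
  + by rewrite invr_gt0.
  + by move=> h2; rewrite divr_gt0 // ltr0n.
  + by rewrite divr_gt0.
  + by rewrite divr_gt0.
  + by rewrite divr_gt0.
  + by rewrite invr_gt0.
  + by rewrite divr_gt0.
- move=> i; apply: (@eigen_eq R n E t1 t2 t3 cyc a p q s w d c x hn hE).
  + by rewrite /a; field.
  + by rewrite /q /p; field.
  + by rewrite /q /p; field.
  + by rewrite /s /w; field.
  + by rewrite /s /w; field.
  + by rewrite /d /c; field.
  + by rewrite /d /c; field.
  + rewrite -{1}hx /hsec /e3R /ecR /a /q /s /c natrM.
    have [->|->] : cyc = true \/ cyc = false by case: (cyc); [left|right].
      by case: (0 < t3)%N; field; rewrite ?nz1 ?nz2 ?nz3 ?nz4.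
    by case: (0 < t3)%N; field; rewrite ?nz1 ?nz2 ?nz3 ?nz4.
- by rewrite hn /F0_n /F0_C /F0_B -!addnA.
Qed.

Lemma pos_mono t2 t3 (x y : R) : pos t2 t3 x -> x <= y -> pos t2 t3 y.
Proof.
move=> [x1 x2 x3 x4] xy.
have y1 : 1 < y by apply: lt_le_trans xy.
have sq : x ^+ 2 <= y ^+ 2 by nra.
split => //; [exact: lt_le_trans sq | exact: lt_le_trans sq | nra].
Qed.

Lemma pos_nz t2 t3 (x : R) : pos t2 t3 x ->
  [/\ x - 1 != 0, x ^+ 2 - t2%:R != 0, x ^+ 2 - 2 * t3%:R != 0 & x ^+ 2 - x - 1 != 0].
Proof.
by case=> x1 x2 x3 x4; split; rewrite gt_eqF // ?subr_gt0.
Qed.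

Definition Dx (t2 t3 : nat) (x : R) :=
  (x - 1) * (x ^+ 2 - t2%:R) * (x ^+ 2 - 2 * t3%:R) * (x ^+ 2 - x - 1).

Lemma Dx_pos t2 t3 (x : R) : pos t2 t3 x -> 0 < Dx t2 t3 x.
Proof.
case=> x1 x2 x3 x4; rewrite /Dx !mulr_gt0 // subr_gt0 //.
Qed.

Definition Ppoly (t1 t2 t3 : nat) (cyc : bool) : {poly R} :=
  let D1 := 'X - 1 in let D2 := 'X ^+ 2 - (t2%:R)%:P in
  let D3 := 'X ^+ 2 - (2 * t3%:R)%:P in let D4 := 'X ^+ 2 - 'X - 1 in
  'X * (D1 * D2 * D3 * D4) - ((2 * t1%:R)%:P * (D2 * D3 * D4) + (t2%:R)%:P * 'X * (D1 * D3 * D4)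
   + (e3R t3)%:P * 'X * (D1 * D2 * D4) + (ecR cyc)%:P * ('X - 1) * (D1 * D2 * D3)).

Lemma PpolyE t1 t2 t3 cyc (x : R) : pos t2 t3 x ->
  (Ppoly t1 t2 t3 cyc).[x] = (x - hsec t1 t2 t3 cyc x) * Dx t2 t3 x.
Proof.
move=> /pos_nz [n1 n2 n3 n4].
rewrite /Ppoly /Dx /hsec !(hornerD, hornerN, hornerM, hornerX, hornerC, horner_exp).
move: (e3R t3) (ecR cyc) => e3 ec.
by field; rewrite ?n1 ?n2 ?n3 ?n4.
Qed.

Lemma root_exists t1 t2 t3 cyc (lo hi : R) : lo <= hi -> pos t2 t3 lo ->
  lo <= hsec t1 t2 t3 cyc lo -> hsec t1 t2 t3 cyc hi <= hi ->
  exists2 x, lo <= x <= hi & hsec t1 t2 t3 cyc x = x.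
Proof.
move=> lohi plo hlo hhi.
have phi := @pos_mono _ _ _ _ plo lohi.
have [x /andP[x1 x2] rx] : exists2 x, lo <= x <= hi & root (Ppoly t1 t2 t3 cyc) x.
  apply: poly_ivt => //; rewrite !PpolyE // ; apply/andP; split.
    by rewrite pmulr_lle0 ?(@Dx_pos _ _ _ _) // subr_le0.
  by rewrite pmulr_lge0 ?(@Dx_pos _ _ _ _) // subr_ge0.
exists x; first by rewrite x1 x2.
have px := @pos_mono _ _ _ _ plo x1.
move: rx; rewrite /root PpolyE // mulf_eq0 (gt_eqF (@Dx_pos _ _ _ px)) orbF subr_eq0.
by move/eqP.
Qed.

Lemma hsec_le t1 t2 t3 cyc (x : R) : (2 * t1 + 2 * t2 + 2 * t3 + 4)%N%:R <= x ->
  hsec t1 t2 t3 cyc x <= x.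
Proof.
rewrite /hsec !natrD ?natrM ?addr0 => hx.
have u1 : 0 <= t1%:R :> R by apply: ler0n.
have u2 : 0 <= t2%:R :> R by apply: ler0n.
have u3 : 0 <= t3%:R :> R by apply: ler0n.
have e3a : 0 <= e3R t3 by rewrite /e3R; case: ifP.
have e3b : e3R t3 <= 2 by rewrite /e3R; case: ifP.
have eca : 0 <= ecR cyc by rewrite /ecR; case: ifP.
have ecb : ecR cyc <= 2 by rewrite /ecR; case: ifP.
move: (e3R t3) (ecR cyc) e3a e3b eca ecb => e3 ec e3a e3b eca ecb.
move: (t1%:R) (t2%:R) (t3%:R) u1 u2 u3 hx => v1 v2 v3 u1 u2 u3 hx.
have p1 : 0 < x - 1 by lra.
have p2 : 0 < x ^+ 2 - v2 by nra.
have p3 : 0 < x ^+ 2 - 2 * v3 by nra.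
have p4 : 0 < x ^+ 2 - x - 1 by nra.
have hx2 : x <= x ^+ 2 - x by nra.
have b1 : 2 * v1 / (x - 1) <= 2 * v1.
  rewrite ler_pdivrMr //.
  have q : 0 <= 2 * v1 * (x - 2) by apply: mulr_ge0; lra.
  have -> : 2 * v1 * (x - 1) = 2 * v1 * (x - 2) + 2 * v1 by ring.
  lra.
have b2 : v2 * x / (x ^+ 2 - v2) <= v2.
  rewrite ler_pdivrMr //.
  have q : 0 <= v2 * (x ^+ 2 - x - v2) by apply: mulr_ge0; lra.
  have -> : v2 * (x ^+ 2 - v2) = v2 * (x ^+ 2 - x - v2) + v2 * x by ring.
  lra.
have b3 : e3 * x / (x ^+ 2 - 2 * v3) <= 2.
  rewrite ler_pdivrMr //.
  have q : 0 <= (2 - e3) * x by apply: mulr_ge0; lra.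
  have -> : e3 * x = 2 * x - (2 - e3) * x by ring.
  lra.
have b4 : ec * (x - 1) / (x ^+ 2 - x - 1) <= 2.
  rewrite ler_pdivrMr //.
  have q : 0 <= (2 - ec) * (x - 1) by apply: mulr_ge0; lra.
  have -> : ec * (x - 1) = 2 * (x - 1) - (2 - ec) * (x - 1) by ring.
  lra.
lra.
Qed.

Lemma max2 (a b : R) : exists m, [/\ m = a \/ m = b, a <= m & b <= m].
Proof.
case: (leP a b) => h.
  by exists b; split => //; right.
by exists a; split => //; [left | apply: ltW].
Qed.

Lemma lower_ok t1 t2 t3 (x : R) : 2 <= x -> 2 * t2%:R <= x ^+ 2 -> 2 * t3%:R + 2 <= x ^+ 2 ->
  2 * t1%:R <= x ^+ 2 - x ->
  [\/ x = 2, x ^+ 2 = 2 * t2%:R, x ^+ 2 = 2 * t3%:R + 2 | x ^+ 2 - x = 2 * t1%:R] ->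
  x <= hsec t1 t2 t3 true x.
Proof.
move=> h1 h2 h3 h4 hc.
have u1 : 0 <= t1%:R :> R by apply: ler0n.
have u2 : 0 <= t2%:R :> R by apply: ler0n.
have u3 : 0 <= t3%:R :> R by apply: ler0n.
have p1 : 0 < x - 1 by lra.
have p2 : 0 < x ^+ 2 - t2%:R by nra.
have p3 : 0 < x ^+ 2 - 2 * t3%:R by nra.
have p4 : 0 < x ^+ 2 - x - 1 by nra.
have e3a : 0 <= e3R t3 by rewrite /e3R; case: ifP.
have T1 : 0 <= 2 * t1%:R / (x - 1) by rewrite divr_ge0 //; lra.
have T2 : 0 <= t2%:R * x / (x ^+ 2 - t2%:R) by rewrite divr_ge0 //; nra.
have T3 : 0 <= e3R t3 * x / (x ^+ 2 - 2 * t3%:R) by rewrite divr_ge0 //; nra.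
have T4 : 0 <= ecR true * (x - 1) / (x ^+ 2 - x - 1) by rewrite divr_ge0 //; rewrite /ecR; nra.
rewrite /hsec.
case: hc => [hx|hx|hx|hx].
- suff : x <= ecR true * (x - 1) / (x ^+ 2 - x - 1) by lra.
  rewrite ler_pdivlMr // /ecR hx; lra.
- suff : x <= t2%:R * x / (x ^+ 2 - t2%:R) by lra.
  rewrite ler_pdivlMr //; nra.
- have t3p : (0 < t3)%N.
    rewrite lt0n; apply/negP => /eqP t30; move: hx; rewrite t30 mulr0 add0r => hx; nra.
  suff : x <= e3R t3 * x / (x ^+ 2 - 2 * t3%:R) by lra.
  rewrite ler_pdivlMr // /e3R t3p; nra.
- suff : x <= 2 * t1%:R / (x - 1) by lra.
  rewrite ler_pdivlMr //; nra.
Qed.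

Lemma lower_exists t1 t2 t3 : exists x : R,
  [/\ 2 <= x, 2 * t2%:R <= x ^+ 2, 2 * t3%:R + 2 <= x ^+ 2 & x <= hsec t1 t2 t3 true x].
Proof.
have u1 : 0 <= t1%:R :> R by apply: ler0n.
have u2 : 0 <= t2%:R :> R by apply: ler0n.
have u3 : 0 <= t3%:R :> R by apply: ler0n.
pose c2 := Num.sqrt (2 * t2%:R : R).
pose c3 := Num.sqrt (2 * t3%:R + 2 : R).
pose S := Num.sqrt (1 + 8 * t1%:R : R).
pose c1 := (1 + S) / 2.
have hc2 : c2 ^+ 2 = 2 * t2%:R by rewrite sqr_sqrtr //; lra.
have hc3 : c3 ^+ 2 = 2 * t3%:R + 2 by rewrite sqr_sqrtr //; lra.
have hS : S ^+ 2 = 1 + 8 * t1%:R by rewrite sqr_sqrtr //; lra.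
have g2 : 0 <= c2 by apply: sqrtr_ge0.
have g3 : 0 <= c3 by apply: sqrtr_ge0.
have gS : 0 <= S by apply: sqrtr_ge0.
have hc1 : c1 ^+ 2 - c1 = 2 * t1%:R.
  rewrite /c1; have -> : ((1 + S) / 2) ^+ 2 - (1 + S) / 2 = (S ^+ 2 - 1) / 4 by field.
  by rewrite hS; field.
have g1 : 1 / 2 <= c1 by rewrite /c1; lra.
have [m1 [e1 m1a m1b]] := max2 c3 c1.
have [m2 [e2 m2a m2b]] := max2 c2 m1.
have [x [ex xa xb]] := max2 2 m2.
have xc3 : c3 <= x by lra.
have xc1 : c1 <= x by lra.
have xc2 : c2 <= x by lra.
have h2 : 2 * t2%:R <= x ^+ 2 by nra.
have h3 : 2 * t3%:R + 2 <= x ^+ 2 by nra.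
have h4 : 2 * t1%:R <= x ^+ 2 - x by nra.
exists x; split => //; apply: lower_ok => //.
case: ex => [->|ex]; first by constructor 1.
case: e2 => [e2|e2]; rewrite ex e2; first by constructor 2.
by case: e1 => ->; [constructor 3 | constructor 4].
Qed.

Lemma cmp_sec t1 t2 t3 (x : R) : 2 <= x -> t2.+1%:R < x ^+ 2 -> pos t2 t3 x ->
  hsec t1 t2 t3 true x < hsec t1.+1 t2.+1 t3 false x.
Proof.
move=> h1 h2 /pos_nz [n1 n2 n3 n4].
have n5 : x ^+ 2 - t2%:R - 1 != 0 by rewrite -addrA -opprD natr1 subr_eq0 gt_eqF.
have E : hsec t1.+1 t2.+1 t3 false x - hsec t1 t2 t3 true x =
   2 * (x - 2) / ((x - 1) * (x ^+ 2 - x - 1)) + x ^+ 3 / ((x ^+ 2 - t2%:R) * (x ^+ 2 - t2%:R - 1)).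
  rewrite /hsec /ecR -!natr1; move: (e3R t3) => e3.
  by field; rewrite ?n1 ?n2 ?n3 ?n4 ?n5.
have p1 : 0 < x - 1 by lra.
have p4 : 0 < x ^+ 2 - x - 1 by nra.
have p5 : 0 < x ^+ 2 - t2%:R - 1 by rewrite -addrA -opprD natr1 subr_gt0.
have p2 : 0 < x ^+ 2 - t2%:R by lra.
have A : 0 <= 2 * (x - 2) / ((x - 1) * (x ^+ 2 - x - 1)) by rewrite divr_ge0 //; [lra | nra].
have B : 0 < x ^+ 3 / ((x ^+ 2 - t2%:R) * (x ^+ 2 - t2%:R - 1)).
  have x3 : 0 < x ^+ 3 by apply: exprn_gt0; lra.
  by rewrite divr_gt0 // mulr_gt0.
rewrite -subr_gt0 E; lra.
Qed.

End E.

Local Open Scope ring_scope.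

Theorem proposition4p2 (R : realType) (t1 t2 t3 : nat)
    (ht2 : t2 = 0%N \/ (2 <= t2)%N) :
  exists rho1 rho0 : R,
    [/\ is_largest_eigenvalue (A_F1 R t1 t2 t3) rho1,
        is_largest_eigenvalue (A_F0 R t1.+1 t2.+1 t3) rho0
      & rho1 < rho0].
Proof.
have u1 : 0 <= t1%:R :> R by apply: ler0n.
have u2 : 0 <= t2%:R :> R by apply: ler0n.
have u3 : 0 <= t3%:R :> R by apply: ler0n.
have [a1 [a12 a1t2 a1t3 a1h]] := lower_exists R t1 t2 t3.
have A4 : 4 <= a1 ^+ 2 by nra.
have pa1 : pos R t2 t3 a1.
  split; [lra | lra | lra | nra].
have [m1 [_ m1a m1b]] := @max2 R a1 (2 * t1 + 2 * t2 + 2 * t3 + 4)%N%:R.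
have [r1 /andP[r1a r1b] hr1] := @root_exists R t1 t2 t3 true a1 m1 m1a pa1 a1h (@hsec_le R t1 t2 t3 true m1 m1b).
have pr1 : pos R t2 t3 r1 := @pos_mono R _ _ _ _ pa1 r1a.
have r12 : 2 <= r1 by lra.
have r1sq : a1 ^+ 2 <= r1 ^+ 2 by nra.
have pr1' : pos R t2.+1 t3 r1.
  case: pr1 => p1 p2 p3 p4; split => //.
  rewrite -natr1.
  case: ht2 => [->|h2]; first by rewrite add0r; lra.
  have : 2 <= t2%:R :> R by rewrite ler_nat.
  lra.
have cmp := @cmp_sec R t1 t2 t3 r1 r12 (let: And4 _ h _ _ := pr1' in h) pr1.
rewrite hr1 in cmp.
have [m0 [_ m0a m0b]] := @max2 R r1 (2 * t1.+1 + 2 * t2.+1 + 2 * t3 + 4)%N%:R.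
have [r0 /andP[r0a r0b] hr0] := @root_exists R t1.+1 t2.+1 t3 false r1 m0 m0a pr1' (ltW cmp) (@hsec_le R t1.+1 t2.+1 t3 false m0 m0b).
have pr0 : pos R t2.+1 t3 r0 := @pos_mono R _ _ _ _ pr1' r0a.
exists r1, r0; split.
- by apply: (@largest_of_root R (F1_n t1 t2 t3) (F1_edges t1 t2 t3) t1 t2 t3 true).
- apply: (@largest_of_root R (F0_n t1.+1 t2.+1 t3) (F0_edges t1.+1 t2.+1 t3) t1.+1 t2.+1 t3 false) => //.
    by rewrite /ncyc addn0.
  by move=> u v; rewrite /Eg cats0.
- rewrite lt_neqAle r0a andbT; apply/eqP => e.
  by move: cmp; rewrite e hr0 ltxx.
Qed.
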